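(* Let $M$ be an $\aleph_1$-saturated model of a theory $T$, $\phi(x,y)$ a formula, $b$ a tuple in $M$, $U=\phi(M,b)$ and $\sigma\in\mathrm{Aut}(M)$. Then: (1) $\xi_{\sigma,U}(M)$ is closed in $2^{\mathbb{Z}}$. (2) For every elementary extension $N\succeq M$ and every $\tau\in\mathrm{Aut}(N)$ extending $\sigma$, we have $\xi_{\tau,V}(N)=\xi_{\sigma,U}(M)$, where $V=\phi(N,b)$.
   Context: For a bijection $\sigma$ of a set $X$ and $B\subseteq X$, $\xi_{\sigma,B}(a)=\{n\in\mathbb{Z}:\sigma^n(a)\in B\}$, viewed as an element of $2^{\mathbb{Z}}$ (product topology), and $\xi_{\sigma,B}(X)$ is the image of $X$ under this map. *)

(* Defs.v *)
From HB Require Import structures.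
From mathcomp Require Import all_boot all_order all_algebra.
From mathcomp Require Import all_classical all_reals topology.
From Stdlib Require List.
Set Implicit Arguments. Unset Strict Implicit. Unset Printing Implicit Defensive.
Local Open Scope classical_set_scope.

Record language := Language {
  fsym : Type; fary : fsym -> nat;
  rsym : Type; rary : rsym -> nat }.

Section Syntax.
Variable L : language.

Inductive term : Type :=
  | tvar : nat -> term
  | tapp : forall f : fsym L, ('I_(fary f) -> term) -> term.

(* variables are named by nat; Fex i phi binds variable i *)
Inductive formula : Type :=
  | Feq : term -> term -> formula
  | Frel : forall r : rsym L, ('I_(rary r) -> term) -> formula
  | Fneg : formula -> formula
  | Fand : formula -> formula -> formula
  | Fex : nat -> formula -> formula.

Fixpoint tfree (i : nat) (t : term) : Prop :=
  match t with
  | tvar j => i = j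
  | tapp f ts => exists k, tfree i (ts k)
  end.

Fixpoint free (i : nat) (phi : formula) : Prop :=
  match phi with
  | Feq t1 t2 => tfree i t1 \/ tfree i t2
  | Frel r ts => exists k, tfree i (ts k)
  | Fneg psi => free i psi
  | Fand psi chi => free i psi \/ free i chi
  | Fex j psi => i <> j /\ free i psi
  end.
End Syntax.

Record structure (L : language) := Structure {
  carrier :> Type;
  funs : forall f : fsym L, ('I_(fary f) -> carrier) -> carrier;
  rels : forall r : rsym L, ('I_(rary r) -> carrier) -> Prop }.

Section Semantics.
Variables (L : language) (M : structure L).

Definition upd (s : nat -> M) (i : nat) (a : M) : nat -> M :=
  fun j => if j == i then a else s j.

Fixpoint eval (s : nat -> M) (t : term L) : M :=
  match t with
  | tvar j => s j
  | tapp f ts => funs (fun k => eval s (ts k))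
  end.

Fixpoint sat (s : nat -> M) (phi : formula L) : Prop :=
  match phi with
  | Feq t1 t2 => eval s t1 = eval s t2
  | Frel r ts => rels (fun k => eval s (ts k))
  | Fneg psi => ~ sat s psi
  | Fand psi chi => sat s psi /\ sat s chi
  | Fex i psi => exists a, sat (upd s i a) psi
  end.

Definition models (T : set (formula L)) : Prop :=
  forall phi, T phi -> forall s, sat s phi.

(* A formula over A is a
   pair (phi, s) in the type variable 0, whose other free variables are
   assigned by s to elements of A. *)
Definition aleph1_saturated : Prop :=
  forall (A : set M), countable A ->
  forall (p : set (formula L * (nat -> M))),
    (forall q, p q -> forall i, i <> 0%N -> free i q.1 -> A (q.2 i)) ->
    (forall l : seq (formula L * (nat -> M)),
        (forall q, List.In q l -> p q) ->
        exists a : M, forall q, List.In q l -> sat (upd q.2 0 a) q.1) ->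
    exists a : M, forall q, p q -> sat (upd q.2 0 a) q.1.

Definition automorphism (sigma : M -> M) : Prop :=
  bijective sigma /\
  (forall f (args : 'I_(fary f) -> M), sigma (funs args) = funs (sigma \o args)) /\
  (forall r (args : 'I_(rary r) -> M), rels args <-> rels (sigma \o args)).

(* the set phi(M, b) of n-tuples: the tuple variable x is (x_0,...,x_{n-1})
   = variables 0..n-1, the parameters are the values of the assignment b on the
   remaining (free) variables *)
Definition tuple_assign (n : nat) (b : nat -> M) (a : 'I_n -> M) : nat -> M :=
  fun j => match ltnP j n with
           | LtnNotGeq H => a (Ordinal H)
           | _ => b j
           end.

Definition defset (n : nat) (phi : formula L) (b : nat -> M) : set ('I_n -> M) :=
  [set a | sat (tuple_assign b a) phi].

End Semantics.

Definition elementary (L : language) (M N : structure L) (e : M -> N) : Prop :=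
  forall (phi : formula L) (s : nat -> M), sat s phi <-> sat (e \o s) phi.

Definition tuple_map (X : Type) (n : nat) (sigma : X -> X) : ('I_n -> X) -> ('I_n -> X) :=
  fun a => sigma \o a.

(* "sigma^k(a) \in B" for k : int, sigma a bijection; for negative k,
   sigma^{-(j+1)}(a) \in B iff the unique c with sigma^{j+1}(c) = a lies in B *)
Definition zpow_in (X : Type) (sigma : X -> X) (B : set X) (a : X) (k : int) : Prop :=
  match k with
  | Posz j => B (iter j sigma a)
  | Negz j => exists c, iter j.+1 sigma c = a /\ B c
  end.

Definition xi (X : Type) (sigma : X -> X) (B : set X) (a : X) : int -> bool :=
  fun k => `[< zpow_in sigma B a k >].

Definition xi_image (X : Type) (sigma : X -> X) (B : set X) : set {ptws int -> bool} :=
  [set xi sigma B a | a in [set: X]].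

(* Main.v *)
Require Import Defs.
From HB Require Import structures.
From mathcomp Require Import all_boot all_order all_algebra.
From mathcomp Require Import all_classical all_reals topology.
From mathcomp Require Import zify.
From Stdlib Require List.
Set Implicit Arguments. Unset Strict Implicit. Unset Printing Implicit Defensive.
Local Open Scope classical_set_scope.

Section Gen.
Variable L : language.

Fixpoint trename (r : nat -> nat) (t : term L) : term L :=
  match t with
  | tvar j => tvar L (r j)
  | tapp f ts => tapp (fun k => trename r (ts k))
  end.

Fixpoint frename (r : nat -> nat) (p : formula L) : formula L :=
  match p with
  | Feq t1 t2 => Feq (trename r t1) (trename r t2)
  | Frel R ts => Frel (r := R) (fun k => trename r (ts k))
  | Fneg q => Fneg (frename r q)
  | Fand q1 q2 => Fand (frename r q1) (frename r q2)
  | Fex i q => Fex (r i) (frename r q)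
  end.

Lemma eval_rename (M : structure L) r (s : nat -> M) t :
  Defs.eval s (trename r t) = Defs.eval (s \o r) t.
Proof.
elim: t => [j|f ts IH] //=; congr funs; apply: funext => k; exact: IH.
Qed.

Lemma upd_comp (M : structure L) r (s : nat -> M) i a : injective r ->
  (upd s (r i) a) \o r = upd (s \o r) i a.
Proof. by move=> ri; apply: funext => j; rewrite /upd /= (inj_eq ri). Qed.

Lemma sat_rename (M : structure L) r (s : nat -> M) p : injective r ->
  sat s (frename r p) <-> sat (s \o r) p.
Proof.
move=> ri; elim: p s => [t1 t2|R ts|q IH|q1 IH1 q2 IH2|i q IH] s /=.
- by rewrite !eval_rename.
- have -> : (fun k => Defs.eval s (trename r (ts k))) = (fun k => Defs.eval (s \o r) (ts k)).
    by apply: funext => k; rewrite eval_rename.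
  by [].
- by split => H1 H2; apply: H1; apply/IH.
- by split => -[/IH1 h1 /IH2 h2].
- split=> -[a Ha]; exists a.
    by move/IH: Ha; rewrite upd_comp.
  by apply/IH; rewrite upd_comp.
Qed.

Definition exs (l : seq nat) (p : formula L) := foldr (@Fex L) p l.
Definition agree (X : Type) (l : seq nat) (v s : nat -> X) : nat -> X :=
  fun j => if j \in l then v j else s j.

Lemma sat_exs (M : structure L) l (s : nat -> M) p :
  sat s (exs l p) <-> exists t : nat -> M, (forall j, j \notin l -> t j = s j) /\ sat t p.
Proof.
elim: l s => [|x l IH] s /=.
  split=> [H|[t [Ht H]]]; first by exists s.
  by have -> : s = t by apply: funext=> j; rewrite Ht.
split=> [[a /IH [t [Ht H]]]|[t [Ht H]]].
  exists t; split=> // j; rewrite in_cons negb_or => /andP [jx jl].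
  by rewrite Ht // /upd (negbTE jx).
exists (t x); apply/IH; exists t; split=> // j jl.
rewrite /upd; case: eqP => [->//|/eqP jx]; apply: Ht.
by rewrite in_cons negb_or jx.
Qed.

Definition ftrue : formula L := Feq (tvar L 0) (tvar L 0).

Definition Nl (l : seq nat) := (foldr maxn 0 l).+1.

Definition blk (l : seq nat) (m i j : nat) : nat :=
  if j \in l then j else Nl l + (j * m + i).

Lemma in_le_max l j : j \in l -> j < Nl l.
Proof.
rewrite /Nl ltnS; elim: l => //= x l IH; rewrite in_cons => /orP [/eqP ->|/IH h].
  exact: leq_maxl.
exact: leq_trans h (leq_maxr _ _).
Qed.

Lemma blk_out l m i j : j \notin l -> blk l m i j \notin l.
Proof.
move=> jl; rewrite /blk (negbTE jl); apply/negP => /in_le_max; lia.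
Qed.

Lemma blk_inj l m i : i < m -> injective (blk l m i).
Proof.
move=> im j1 j2; rewrite /blk.
case: (boolP (j1 \in l)) => h1; case: (boolP (j2 \in l)) => h2 //.
- move=> e; move: (in_le_max h1); rewrite e; lia.
- move=> e; move: (in_le_max h2); rewrite -e; lia.
- move/eqP; rewrite eqn_add2l => /eqP e.
  have := congr1 (fun x => x %/ m) e => /=.
  rewrite !divnMDl ?(leq_ltn_trans _ im) // !divn_small //.
  by rewrite !addn0.
Qed.

Fixpoint Thr (l : seq nat) (m i : nat) (fs : seq (formula L)) : formula L :=
  match fs with
  | [::] => ftrue
  | p :: fs' => Fand (frename (blk l m i) p) (Thr l m i.+1 fs')
  end.

Definition Th (X : Type) (l : seq nat) (F : seq (formula L * (nat -> X))) :=
  Thr l (size F) 0 (map fst F).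

Definition sF (X : Type) (l : seq nat) (F : seq (formula L * (nat -> X))) (d : X)
  (k : nat) : X :=
  if Nl l <= k then
    (nth (ftrue, fun _ => d) F ((k - Nl l) %% size F)).2 ((k - Nl l) %/ size F)
  else d.

Lemma sF_blk X l (F : seq (formula L * (nat -> X))) d i j :
  i < size F -> j \notin l ->
  sF l F d (blk l (size F) i j) = (nth (ftrue, fun _ => d) F i).2 j.
Proof.
move=> iF jl; rewrite /sF /blk (negbTE jl) leq_addr addKn.
rewrite modnMDl modn_small // divnMDl ?(leq_ltn_trans _ iF) //.
by rewrite divn_small // addn0.
Qed.

Lemma sat_Thr (M : structure L) l m (s : nat -> M) F i :
  i + size F <= m ->
  (forall k, k < size F -> s \o blk l m (i + k) = agree l s (nth (ftrue, s) F k).2) ->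
  (sat s (Thr l m i (map fst F)) <-> forall q, List.In q F -> sat (agree l s q.2) q.1).
Proof.
elim: F i => [|q F IH] i /= hm hb.
  by split=> // _ q [].
have im : i < m by lia.
have h0 := hb 0 erefl; rewrite addn0 /= in h0.
have hb' : forall k, k < size F -> s \o blk l m (i.+1 + k) = agree l s (nth (ftrue, s) F k).2.
  by move=> k hk; rewrite addSnnS; exact: (hb k.+1 hk).
have hm' : i.+1 + size F <= m by lia.
split.
- move=> [h1 h2] q' [<-|qF].
    by move: h1; rewrite (sat_rename _ _ (@blk_inj l m i im)) h0.
  by move: q' qF; apply/(IH i.+1 hm' hb').
- move=> H; split.
    by apply/(sat_rename _ _ (@blk_inj l m i im)); rewrite h0; apply: H; left.
  by apply/(IH i.+1 hm' hb') => q' qF; apply: H; right.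
Qed.

Lemma sat_Th (M : structure L) l (F : seq (formula L * (nat -> M))) d (s : nat -> M) :
  (forall j, j \notin l -> s j = sF l F d j) ->
  (sat s (Th l F) <-> forall q, List.In q F -> sat (agree l s q.2) q.1).
Proof.
move=> hs; apply: sat_Thr => // k hk; apply: funext => j /=.
rewrite /agree; case: (boolP (j \in l)) => jl.
  by rewrite /blk jl.
rewrite hs; last exact: blk_out.
by rewrite sF_blk // (set_nth_default (ftrue, s)).
Qed.

Lemma nth_In' (T : Type) (x0 : T) (s : seq T) i : i < size s -> List.In (nth x0 s i) s.
Proof. by elim: s i => [|x s IH] [|i] //= h; [left | right; exact: IH]. Qed.

Lemma sF_in X (A : set X) l F d : A d ->
  (forall q, List.In q F -> forall j, A (q.2 j)) -> forall k, A (sF l F d k).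
Proof.
move=> Ad HF k; rewrite /sF; case: ifP => // _.
set i := (_ %% _); case: (ltnP i (size F)) => h.
  by apply: HF; apply: nth_In'.
by rewrite nth_default.
Qed.

Lemma Th_map X Y l (F : seq (formula L * (nat -> X))) (g : (nat -> X) -> (nat -> Y)) :
  Th l (map (fun q => (q.1, g q.2)) F) = Th l F.
Proof. by rewrite /Th size_map -map_comp. Qed.

Lemma sF_map X Y l (F : seq (formula L * (nat -> X))) d (e : X -> Y) :
  e \o sF l F d = sF l (map (fun q => (q.1, e \o q.2)) F) (e d).
Proof.
apply: funext => k; rewrite /sF /= size_map; case: ifP => // _.
set i := (_ %% _); case: (ltnP i (size F)) => h.
  by rewrite (nth_map (ftrue, fun _ => d)).
by rewrite !nth_default ?size_map.
Qed.

Lemma In_cat (T : Type) (x : T) s1 s2 : List.In x (s1 ++ s2) <-> List.In x s1 \/ List.In x s2.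
Proof.
elim: s1 => [|y s1 IH] /=; first by split => [|[[]|]]; [right|].
rewrite IH; tauto.
Qed.

Lemma In_map (T U : Type) (f : T -> U) x s : List.In x s -> List.In (f x) (map f s).
Proof. by elim: s => //= y s IH [->|h]; [left|right; exact: IH]. Qed.

Lemma collect (T U : Type) (P : U -> Prop) (R : seq U -> T -> Prop) (G : seq T) :
  (forall g, List.In g G -> exists F, (forall q, List.In q F -> P q) /\ R F g) ->
  exists Fs, (forall q, List.In q Fs -> P q) /\
    forall g, List.In g G -> exists F, (forall q, List.In q F -> List.In q Fs) /\ R F g.
Proof.
elim: G => [|g G IH] H.
  by exists [::]; split=> // g [].
have [F [FP RF]] := H g (or_introl erefl).
have [Fs [FsP HFs]] := IH (fun g' h => H g' (or_intror h)).
exists (F ++ Fs); split.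
  by move=> q /In_cat [] ; [exact: FP | exact: FsP].
move=> g' [<-|hg].
  by exists F; split=> // q qF; apply/In_cat; left.
have [F' [F'sub RF']] := HFs g' hg; exists F'; split=> // q /F'sub h.
by apply/In_cat; right.
Qed.

Lemma countableU1 T (A : set T) a : countable A -> countable (A `|` [set a]).
Proof.
move=> cA.
have -> : A `|` [set a] = \bigcup_(i in [set: bool]) (if i then A else [set a]).
  apply/seteqP; split=> x.
  - by case=> h; [exists true | exists false].
  - by case=> -[] _ h; [left | right].
apply: bigcup_countable; first exact: countableP.
by case.
Qed.

End Gen.
Section Multi.
Variables (L : language) (M : structure L).

Definition finsat (l : seq nat) (P : set (formula L * (nat -> M))) :=
  forall F : seq (formula L * (nat -> M)), (forall q, List.In q F -> P q) ->
    exists v : nat -> M, forall q, List.In q F -> sat (agree l v q.2) q.1.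

Lemma agree_eq (X : Type) l (u w s : nat -> X) :
  (forall j, j \in l -> u j = w j) -> agree l u s = agree l w s.
Proof. by move=> h; apply: funext => j; rewrite /agree; case: ifP => // /h. Qed.

Lemma multi (Hsat : aleph1_saturated M) (l : seq nat) : uniq l ->
  forall (A : set M) (d : M), countable A -> A d ->
  forall P : set (formula L * (nat -> M)),
  (forall q, P q -> forall j, A (q.2 j)) -> finsat l P ->
  exists v : nat -> M, forall q, P q -> sat (agree l v q.2) q.1.
Proof.
elim: l => [|x l IH] /=.
  move=> _ A d _ _ P _ hf; exists (fun _ => d) => q Pq.
  have [v hv] := hf [:: q] (fun q' h => match h with or_introl e => eq_ind q P Pq q' e | or_intror f => match f with end end).
  have := hv q (or_introl erefl).
  have -> : agree [::] v q.2 = q.2 by apply: funext.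
  by have -> : agree [::] (fun _ => d) q.2 = q.2 by apply: funext.
move=> /andP [xl ul] A d cA Ad P HA hf.
pose sw j := if j == 0 then x else if j == x then 0 else j.
have swK : involutive sw.
  move=> j; rewrite /sw; case: (eqVneq j 0) => [->|j0].
    by case: (eqVneq x 0) => [->|x0]; rewrite ?eqxx // (negbTE x0) eqxx.
  case: (eqVneq j x) => [->|jx]; first by rewrite eqxx.
  by rewrite (negbTE j0) (negbTE jx).
have swI : injective sw := inv_inj swK.
have swx : sw x = 0 by rewrite /sw; case: (eqVneq x 0) => [->|x0]; rewrite ?eqxx // (negbTE x0) eqxx.
pose l1 := x :: l.
have key : forall F (a : M), sat (upd (sF l1 F d \o sw) 0 a) (frename sw (exs l (Th l1 F))) <->
                         sat (upd (sF l1 F d) x a) (exs l (Th l1 F)).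
  move=> F a.
  have e : upd (sF l1 F d \o sw) 0 a \o sw = upd (sF l1 F d) x a.
    apply: funext => j; rewrite /upd /= -swx (inj_eq swI).
    by case: ifP => //; rewrite swK.
  by rewrite -e; apply: sat_rename.
pose P1 := [set q : formula L * (nat -> M) | exists F, (forall q', List.In q' F -> P q') /\
   q = (frename sw (exs l (Th l1 F)), sF l1 F d \o sw)].
have [a ha] : exists a : M, forall q, P1 q -> sat (upd q.2 0 a) q.1.
  apply: (Hsat A cA).
    move=> q [F [FP ->]] i _ _ /=; apply: sF_in => // q' /FP Pq' j; exact: HA.
  move=> G HG.
  have [Fs [FsP HFs]] := collect (R := fun F (q : formula L * (nat -> M)) =>
    q = (frename sw (exs l (Th l1 F)), sF l1 F d \o sw)) HG.
  have [v hv] := hf Fs FsP.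
  exists (v x) => q /HFs [F [Fsub ->]] /=.
  apply/key; apply/sat_exs; exists (agree l1 v (sF l1 F d)); split.
    move=> j jl; rewrite /agree /upd in_cons.
    by case: (eqVneq j x) => [->|jx] //=; rewrite (negbTE jl).
  apply/(sat_Th (d := d)).
    by move=> j jl; rewrite /agree (negbTE jl).
  move=> q2 qF; have := hv q2 (Fsub q2 qF).
  by rewrite (@agree_eq _ l1 (agree l1 v (sF l1 F d)) v) // => j jl; rewrite /agree jl.
have ha' : forall F, (forall q, List.In q F -> P q) ->
    sat (upd (sF l1 F d) x a) (exs l (Th l1 F)).
  by move=> F HF; apply/key; apply: (ha (_, _)); exists F.
pose P' := [set q : formula L * (nat -> M) | exists F, (forall q', List.In q' F -> P q') /\
   q = (Th l1 F, upd (sF l1 F d) x a)].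
have [v' hv'] : exists v' : nat -> M, forall q, P' q -> sat (agree l v' q.2) q.1.
  apply: (IH ul (A `|` [set a]) d (countableU1 a cA) (or_introl Ad)).
    move=> q [F [FP ->]] j /=; rewrite /upd; case: ifP => _; first by right.
    left; apply: sF_in => // q' /FP Pq' k; exact: HA.
  move=> G HG.
  have [Fs [FsP HFs]] := collect (R := fun F (q : formula L * (nat -> M)) =>
    q = (Th l1 F, upd (sF l1 F d) x a)) HG.
  have /sat_exs [t [ht tsat]] := ha' Fs FsP.
  have tx : t x = a by rewrite ht // /upd eqxx.
  have hall : forall q, List.In q Fs -> sat (agree l1 t q.2) q.1.
    apply/(sat_Th (d := d)) => // j; rewrite in_cons negb_or => /andP [jx jl].
    by rewrite ht // /upd (negbTE jx).
  exists t => q /HFs [F [Fsub ->]] /=.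
  apply/(sat_Th (d := d)).
    move=> j; rewrite in_cons negb_or => /andP [jx jl].
    by rewrite /agree (negbTE jl) /upd (negbTE jx).
  move=> q' q'F; have := hall q' (Fsub q' q'F).
  rewrite (@agree_eq _ l1 (agree l t (upd (sF l1 F d) x a)) t) //.
  move=> j; rewrite in_cons /agree => /orP [/eqP ->|->] //.
  by rewrite (negbTE xl) /upd eqxx tx.
exists (agree l v' (fun _ => a)) => q Pq.
have hq : P' (Th l1 [:: q], upd (sF l1 [:: q] d) x a).
  by exists [:: q]; split => // q' [<-|[]].
have h := hv' _ hq.
have hs : forall j, j \notin l1 -> agree l v' (upd (sF l1 [:: q] d) x a) j = sF l1 [:: q] d j.
  move=> j; rewrite in_cons negb_or => /andP [jx jl].
  by rewrite /agree (negbTE jl) /upd (negbTE jx).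
move: ((sat_Th hs).1 h).
move=> /(_ q (or_introl erefl)).
rewrite (@agree_eq _ l1 (agree l v' (upd (sF l1 [:: q] d) x a)) (agree l v' (fun _ => a))) //.
move=> j; rewrite in_cons /agree => /orP [/eqP ->|->] //.
by rewrite (negbTE xl) /upd eqxx.
Qed.

End Multi.
Definition pw (X : Type) (g g' : X -> X) (k : int) : X -> X :=
  match k with Posz j => iter j g' | Negz j => iter j.+1 g end.

Lemma iter_tuple (X : Type) n (g : X -> X) j (a : 'I_n -> X) :
  iter j (tuple_map g) a = iter j g \o a.
Proof. by elim: j => //= j ->. Qed.

Lemma iterK (X : Type) (g g' : X -> X) j : cancel g g' -> cancel (iter j g) (iter j g').
Proof. by move=> gK; elim: j => // j IH x; rewrite iterSr iterS gK IH. Qed.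

Lemma comp_tuple_assign L (M N : structure L) (h : M -> N) n (b : nat -> M) (a : 'I_n -> M) :
  h \o tuple_assign b a = tuple_assign (h \o b) (h \o a).
Proof. by apply: funext => j; rewrite /tuple_assign /=; case: ltnP. Qed.

Lemma agree_tuple L (M : structure L) n (v s : nat -> M) :
  agree (iota 0 n) v s = tuple_assign s (fun i : 'I_n => v i).
Proof.
apply: funext => j; rewrite /agree mem_iota add0n /= /tuple_assign.
by case: ltnP.
Qed.

Lemma In_map_inv (T U : Type) (f : T -> U) y s : List.In y (map f s) ->
  exists x, List.In x s /\ y = f x.
Proof.
elim: s => //= x s IH [<-|/IH [x' [h ->]]]; first by exists x; split=> //; left.
by exists x'; split=> //; right.
Qed.

Section Auto.
Variables (L : language) (M : structure L).

Lemma eval_auto (g : M -> M) (Hg : automorphism g) (s : nat -> M) t :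
  Defs.eval (g \o s) t = g (Defs.eval s t).
Proof.
elim: t => [j|f ts IH] //=; rewrite Hg.2.1; congr funs; apply: funext => k; exact: IH.
Qed.

Lemma sat_auto (g : M -> M) (Hg : automorphism g) (s : nat -> M) p :
  sat (g \o s) p <-> sat s p.
Proof.
have [g' gK g'K] := Hg.1.
elim: p s => [t1 t2|R ts|q IH|q1 IH1 q2 IH2|i q IH] s /=.
- by rewrite !eval_auto //; split => [/(can_inj gK)|->].
- have -> : (fun k => Defs.eval (g \o s) (ts k)) = g \o (fun k => Defs.eval s (ts k)).
    by apply: funext => k; rewrite /= eval_auto.
  exact: iff_sym (Hg.2.2 _ _).
- by split => H1 H2; apply: H1; [apply: (IH s).2 | apply: (IH s).1].
- by split => -[h1 h2]; split; [apply: (IH1 s).1|apply: (IH2 s).1|apply: (IH1 s).2|apply: (IH2 s).2].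
- split=> -[a Ha].
    exists (g' a); apply: (IH _).1.
    have -> : g \o upd s i (g' a) = upd (g \o s) i a.
      by apply: funext => j; rewrite /upd /=; case: ifP => //; rewrite g'K.
    exact: Ha.
  exists (g a).
  have -> : upd (g \o s) i (g a) = g \o upd s i a.
    by apply: funext => j; rewrite /upd /=; case: ifP.
  exact: (IH _).2.
Qed.

Lemma sat_inv (g g' : M -> M) (Hg : automorphism g) (g'K : cancel g' g) (s : nat -> M) p :
  sat (g' \o s) p <-> sat s p.
Proof.
have e : g \o (g' \o s) = s by apply: funext => j /=; rewrite g'K.
split => h.
  by have := (sat_auto Hg (g' \o s) p).2 h; rewrite e.
by apply: (sat_auto Hg _ p).1; rewrite e.
Qed.

Lemma sat_iter (h : M -> M) p : (forall s, sat (h \o s) p <-> sat s p) ->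
  forall j (s : nat -> M), sat (iter j h \o s) p <-> sat s p.
Proof.
move=> hh; elim=> [|j IH] s; first by split => H; exact: H.
exact: iff_trans (hh (iter j h \o s)) (IH s).
Qed.

Lemma sat_pw (g g' : M -> M) (Hg : automorphism g) (g'K : cancel g' g) k (s : nat -> M) p :
  sat (pw g g' k \o s) p <-> sat s p.
Proof.
case: k => j /=.
  by apply: sat_iter => s0; exact: (sat_inv Hg g'K).
by apply: sat_iter => s0; exact: (sat_auto Hg).

Qed.

Lemma zpow_sat (g g' : M -> M) (Hg : automorphism g) (gK : cancel g g') (g'K : cancel g' g)
  n p (b : nat -> M) (a : 'I_n -> M) k :
  zpow_in (tuple_map g) (defset p b) a k <-> sat (tuple_assign (pw g g' k \o b) a) p.
Proof.
case: k => j /=.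
- rewrite /defset /= iter_tuple.
  have -> : tuple_assign (iter j g' \o b) a = iter j g' \o tuple_assign b (iter j g \o a).
    rewrite comp_tuple_assign; congr tuple_assign; apply: funext => i /=.
    by rewrite iterK.
  exact: iff_sym (sat_pw Hg g'K (Posz j) _ _).
- split.
    move=> [c [<- hc]]; rewrite iter_tuple -comp_tuple_assign.
    exact: (sat_pw Hg g'K (Negz j) _ _).2.
  move=> h; exists (iter j.+1 g' \o a); split.
    rewrite iter_tuple; apply: funext => i /=; exact: (iterK j.+1 g'K).
  rewrite /defset /=; apply: (sat_pw Hg g'K (Negz j) _ _).1.
  rewrite comp_tuple_assign /=.
  have -> : iter j.+1 g \o (iter j.+1 g' \o a) = a.
    by apply: funext => i /=; exact: (iterK j.+1 g'K).
  exact: h.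
Qed.

End Auto.
Unset Implicit Arguments.
Theorem corollary4p4 (L : language) (T : set (formula L)) (M : structure L)
  (HT : models M T) (Hsat : aleph1_saturated M)
  (n : nat) (phi : formula L) (b : nat -> M)
  (sigma : M -> M) (Hsigma : automorphism sigma) :
  closed (xi_image (tuple_map (n := n) sigma) (defset (n := n) phi b))
  /\
  (forall (N : structure L) (e : M -> N), elementary e ->
     forall tau : N -> N, automorphism tau ->
       (forall x : M, tau (e x) = e (sigma x)) ->
       xi_image (tuple_map (n := n) tau) (defset (n := n) phi (e \o b))
       = xi_image (tuple_map (n := n) sigma) (defset (n := n) phi b)).
Proof.
have [s' sK s'K] := Hsigma.1.
pose A := range (fun kj : int * nat => pw sigma s' kj.1 (b kj.2)).
have cA : countable A.
  by apply: card_le_trans (card_image_le _ _) _; exact: countableP.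
pose cnd (f : int -> bool) (k : int) : formula L * (nat -> M) :=
  (if f k then phi else Fneg phi, pw sigma s' k \o b).
have real : forall f : int -> bool,
  (forall K : seq int, exists a : 'I_n -> M, forall k, List.In k K ->
      xi (tuple_map sigma) (defset phi b) a k = f k) ->
  exists a : 'I_n -> M, xi (tuple_map sigma) (defset phi b) a = f.
  move=> f hK.
  have Ab : A (b 0) by exists (0%Z, 0).
  have hP : forall q, [set q | exists k, q = cnd f k] q -> forall j, A (q.2 j).
    by move=> q [k ->] j; exists (k, j).
  have hfs : finsat (iota 0 n) [set q | exists k, q = cnd f k]; last first.
    have [v hv] := @multi L M Hsat (iota 0 n) (iota_uniq 0 n) A (b 0) cA Ab _ hP hfs.
    exists (fun i : 'I_n => v i); apply: funext => k.
    have := hv (cnd f k) (ex_intro _ k erefl).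
    rewrite agree_tuple /cnd /xi; case: (f k) => /= h.
      by apply/asboolP; apply/(zpow_sat Hsigma sK s'K).
    by apply/asboolF => h'; apply: h; apply/(zpow_sat Hsigma sK s'K).
  move=> F HF.
  have [Ks [_ HKs]] := @collect _ _ (fun _ : int => True)
    (fun K q => exists k, List.In k K /\ q = cnd f k) F
    (fun q hq => match HF q hq with ex_intro k e =>
        ex_intro _ [:: k] (conj (fun _ _ => I) (ex_intro _ k (conj (or_introl erefl) e))) end).
  have [a ha] := hK Ks.
  exists (tuple_assign (fun _ => b 0) a) => q /HKs [K [Ksub [k [kK ->]]]].
  rewrite agree_tuple /cnd /=.
  have : (fun i : 'I_n => tuple_assign (fun _ => b 0) a i) = a.
    apply: funext => i /=; rewrite /tuple_assign; case: ltnP => h.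
      by congr a; apply: val_inj.
    by move: (ltn_ord i); rewrite ltnNge h.
  move=> ->.
  have := ha k (Ksub k kK); rewrite /xi; case: (f k) => /=.
    by move/asboolP/(zpow_sat Hsigma sK s'K).
  by move=> h hs; move: h; rewrite asboolT //; apply/(zpow_sat Hsigma sK s'K).
split.
  move=> f fcl.
  suff [a ha] : exists a : 'I_n -> M, xi (tuple_map sigma) (defset phi b) a = f by exists a.
  apply: real => K.
  have ptn : forall k, nbhs f [set g : {ptws int -> bool} | g k = f k].
    move=> k; have := @proj_continuous int (fun _ => bool) k f.
    by move=> /(_ [set f k]); apply; apply/principal_filterP.
  have nB : nbhs f [set g : {ptws int -> bool} | forall k, List.In k K -> g k = f k].
    elim: K => [|k K IH].
      by apply: filterS filterT => g _ k [].
    apply: filterS (filterI (ptn k) IH) => g [h1 h2] k' [<-|h]; [exact: h1 | exact: h2].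
  have [g [[a _ <-] hg]] := fcl _ nB.
  by exists a => k /hg.
move=> N e He tau Htau etau.
have [t' tK t'K] := Htau.1.
have tinv : forall y, t' (e y) = e (s' y).
  by move=> y; rewrite -{1}(s'K y) -etau tK.
have comm : forall k x, pw tau t' k (e x) = e (pw sigma s' k x).
  have it1 : forall m x, iter m tau (e x) = e (iter m sigma x).
    by elim=> //= m IH x; rewrite IH etau.
  have it2 : forall m x, iter m t' (e x) = e (iter m s' x).
    by elim=> //= m IH x; rewrite IH tinv.
  by case=> j x; [exact: it2 | exact: it1].
have xi_e : forall a : 'I_n -> M,
    xi (tuple_map tau) (defset phi (e \o b)) (e \o a) = xi (tuple_map sigma) (defset phi b) a.
  move=> a; apply: funext => k; rewrite /xi; apply: asbool_equiv_eq.
  apply: iff_trans (zpow_sat Htau tK t'K _ _ _ _) _.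
  apply: iff_trans _ (iff_sym (zpow_sat Hsigma sK s'K _ _ _ _)).
  have -> : tuple_assign (pw tau t' k \o (e \o b)) (e \o a)
            = e \o tuple_assign (pw sigma s' k \o b) a.
    rewrite comp_tuple_assign; congr tuple_assign; apply: funext => j /=; exact: comm.
  exact: iff_sym (He _ _).
apply/seteqP; split => g; last first.
  by move=> [a _ <-]; exists (e \o a) => //; exact: xi_e.
move=> [a' _ <-].
set f := xi (tuple_map tau) (defset phi (e \o b)) a'.
suff [a ha] : exists a : 'I_n -> M, xi (tuple_map sigma) (defset phi b) a = f by exists a.
apply: real => K.
pose Fq := map (cnd f) K.
pose l := iota 0 n.
pose G := map (fun q : formula L * (nat -> M) => (q.1, e \o q.2)) Fq.
have hN : sat (sF l G (e (b 0))) (exs l (Th l G)).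
  apply/sat_exs; exists (agree l (tuple_assign (fun _ => e (b 0)) a') (sF l G (e (b 0)))); split.
    by move=> j jl; rewrite /agree (negbTE jl).
  apply/(sat_Th (d := e (b 0))) => [j jl|q]; first by rewrite /agree (negbTE jl).
  move=> hq; have [q0 [q0F eq0]] := In_map_inv hq; have [k [kK ek0]] := In_map_inv q0F; subst q q0.
  rewrite /l agree_tuple /cnd /=.
  have -> : (fun i : 'I_n => agree (iota 0 n) (tuple_assign (fun _ => e (b 0)) a')
          (sF (iota 0 n) G (e (b 0))) i) = a'.
    apply: funext => i /=; rewrite /agree mem_iota /= ltn_ord /tuple_assign.
    case: ltnP => h.
      by congr a'; apply: val_inj.
    by move: (ltn_ord i); rewrite ltnNge h.
  have ek : e \o (pw sigma s' k \o b) = pw tau t' k \o (e \o b).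
    by apply: funext => j /=; rewrite comm.
  rewrite ek /f /xi; case: asboolP => /= h.
    exact/(zpow_sat Htau tK t'K).
  by move=> h'; apply: h; apply/(zpow_sat Htau tK t'K).
rewrite /G -sF_map (Th_map _ _ (fun s => e \o s)) in hN.
have /sat_exs [t [ht tsat]] := (He _ _).2 hN.
have hall := (sat_Th ht).1 tsat.
exists (fun i : 'I_n => t i) => k kK.
have := hall _ (In_map (cnd f) kK).
rewrite agree_tuple /cnd /xi; case E: (f k) => /= h.
  by apply/asboolP/(zpow_sat Hsigma sK s'K).
by apply/asboolF => h'; apply: h; apply/(zpow_sat Hsigma sK s'K).
Qed.
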